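(* Let $S\subseteq\mathcal X$ be a finite nonempty set of candidates. The look-up based CF algorithm $$A_{\mathrm{LU}}(x)=\operatorname*{argmin}_{x'\in S} c(x,x'),$$ where ties among minimizers are broken by a fixed deterministic rule (a fixed total order on $S$, independent of $x$), is IPF stable globally.
   Context: Input space $\mathcal X=\mathcal X_1\times\cdots\times\mathcal X_D$, where each feature $d$ is either categorical ($\mathcal X_d$ a finite set) or numerical ($\mathcal X_d\subseteq\mathbb R$). Cost: $c(x,x')=\sum_{d=1}^D c_d(x_d,x'_d)$ with $c_d(x_d,x'_d)=\mathbb 1\{x_d\neq x'_d\}$ for categorical $d$ and $c_d(x_d,x'_d)=|F_d(x_d)-F_d(x'_d)|$ for numerical $d$, where $F_d$ is a fixed cumulative distribution function (nondecreasing) of feature $d$. A CF algorithm $A$ maps each $x\in\mathcal X$ to a probability distribution over $\mathcal X$; $A$ is deterministic at $x$ if this distribution is a point mass, written $A(x)$. $\Phi(x,x')$ denotes the set of all $w\in\mathcal X$ such that for each numerical $d$, $w_d$ lies in the closed interval between $x_d$ and $x'_d$, and for each categorical $d$, $w_d\in\{x_d,x'_d\}$. IPF stable: $A$ is IPF stable at $x$ if (1) $A$ is deterministic at $x$, and (2) for all $w\in\Phi(x,A(x))$, $A$ is deterministic at $w$ and $A(w)=A(x)$. $A$ is IPF stable globally if it is IPF stable at every $x\in\mathcal X$. *)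

(* Defs.v *)
From HB Require Import structures.
From mathcomp Require Import all_boot all_order all_algebra.
From mathcomp Require Import reals.
Set Implicit Arguments. Unset Strict Implicit. Unset Printing Implicit Defensive.
Import Order.TTheory GRing.Theory Num.Theory.
Local Open Scope ring_scope.

Section Defs.
Variables (R : realType) (D : nat).

(* Points of the ambient space R^D; feature d of x is x d.
   Categorical values are encoded as real numbers (any finite set injects into R). *)
Definition vec := {ffun 'I_D -> R}.

Definition is_cdf (F : R -> R) : Prop :=
  [/\ (forall a b, a <= b -> F a <= F b),
      (forall a e, 0 < e -> exists2 dl, 0 < dl &
          forall b, a <= b -> b < a + dl -> F b - F a < e),
      (forall e, 0 < e -> exists M, forall a, a <= M -> F a < e) &
      (forall e, 0 < e -> exists M, forall a, M <= a -> 1 - F a < e)].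

Definition inX (dom : 'I_D -> R -> Prop) (x : vec) : Prop :=
  forall d, dom d (x d).

Definition cost_d (cat : pred 'I_D) (F : 'I_D -> R -> R) (d : 'I_D) (a b : R) : R :=
  if cat d then (a != b)%:R else `|F d a - F d b|.

Definition cost (cat : pred 'I_D) (F : 'I_D -> R -> R) (x x' : vec) : R :=
  \sum_(d < D) cost_d cat F d (x d) (x' d).

Definition Phi (cat : pred 'I_D) (dom : 'I_D -> R -> Prop) (x x' w : vec) : Prop :=
  inX dom w /\
  forall d, if cat d then (w d == x d) || (w d == x' d)
            else Num.min (x d) (x' d) <= w d <= Num.max (x d) (x' d).

(* A CF algorithm maps each x to a probability distribution over the space,
   given by the probability it assigns to each (boolean) event. *)
Definition cf_alg := vec -> pred vec -> R.

Definition dirac (y : vec) : pred vec -> R := fun E => (E y)%:R.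

Definition deterministic_at (A : cf_alg) (x y : vec) : Prop :=
  forall E : pred vec, A x E = dirac y E.

Definition IPF_stable_at (cat : pred 'I_D) (dom : 'I_D -> R -> Prop)
    (A : cf_alg) (x : vec) : Prop :=
  exists y, deterministic_at A x y /\
    forall w, Phi cat dom x y w -> deterministic_at A w y.

Definition IPF_stable_globally (cat : pred 'I_D) (dom : 'I_D -> R -> Prop)
    (A : cf_alg) : Prop :=
  forall x, inX dom x -> IPF_stable_at cat dom A x.

(* Look-up algorithm: S is listed in the fixed tie-breaking total order;
   A_LU(x) is the first (w.r.t. this order) minimiser of c(x, .) over S. *)
Definition lookup_pt (cat : pred 'I_D) (F : 'I_D -> R -> R) (S : seq vec) (x : vec) : vec :=
  nth (head x S) S
      (find (fun y => all (fun t => cost cat F x y <= cost cat F x t) S) S).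

Definition A_LU (cat : pred 'I_D) (F : 'I_D -> R -> R) (S : seq vec) : cf_alg :=
  fun x => dirac (lookup_pt cat F S x).

End Defs.

(* Main.v *)
Require Import Defs.
From HB Require Import structures.
From mathcomp Require Import all_boot all_order all_algebra.
From mathcomp Require Import reals.
From mathcomp Require Import lra.
Import Order.TTheory GRing.Theory Num.Theory.
Local Open Scope ring_scope.

Section H.
Variables (R : realType) (D : nat) (cat : pred 'I_D) (F : 'I_D -> R -> R).

Lemma costd_tri d (a b c : R) :
  cost_d cat F d a b <= cost_d cat F d a c + cost_d cat F d c b.
Proof.
rewrite /cost_d; case: (cat d).
  case: (eqVneq a b) => [->|ab]; first by rewrite ?eqxx addr_ge0 ?ler0n.
  case: (eqVneq a c) => [ac|ac].
    by rewrite -ac ab /= add0r.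
  by rewrite /= lerDl ler0n.
exact: ler_distD.
Qed.

Lemma cost_tri (x y w : vec R D) :
  cost cat F x y <= cost cat F x w + cost cat F w y.
Proof.
rewrite /cost -big_split /=; apply: ler_sum => d _; exact: costd_tri.
Qed.

Lemma costd_eq d (a b c : R) :
  (~~ cat d -> forall u v, u <= v -> F d u <= F d v) ->
  (if cat d then (c == a) || (c == b)
   else Num.min a b <= c <= Num.max a b) ->
  cost_d cat F d a b = cost_d cat F d a c + cost_d cat F d c b.
Proof.
rewrite /cost_d; case: (cat d) => [_|/(_ isT) mon].
  by case/orP => /eqP ->; rewrite eqxx ?add0r ?addr0.
case: (leP a b) => ab /andP [h1 h2].
  have f1 := mon _ _ h1; have f2 := mon _ _ h2; have f3 := mon _ _ ab.
  rewrite !ler0_norm ?subr_le0 //; lra.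
have f1 := mon _ _ h1; have f2 := mon _ _ h2; have f3 := mon _ _ (ltW ab).
rewrite !ger0_norm ?subr_ge0 //; lra.
Qed.

Lemma cost_eq (dom : 'I_D -> R -> Prop) (x y w : vec R D) :
  (forall d, ~~ cat d -> forall u v, u <= v -> F d u <= F d v) ->
  Phi cat dom x y w ->
  cost cat F x y = cost cat F x w + cost cat F w y.
Proof.
move=> mon [_ hw]; rewrite /cost -big_split /=; apply: eq_bigr => d _.
exact: costd_eq (mon d) (hw d).
Qed.

Lemma exists_min (f : vec R D -> R) (s : seq (vec R D)) :
  s != [::] -> exists2 y, y \in s & forall t, t \in s -> f y <= f t.
Proof.
elim: s => [//|a s IH] _.
case: (eqVneq s [::]) => [->|sn].
  by exists a; rewrite ?mem_head // => t; rewrite inE => /eqP ->.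
have [y ys hy] := IH sn.
case: (leP (f a) (f y)) => ay.
  exists a; first exact: mem_head.
  move=> t; rewrite inE => /orP [/eqP ->//|/hy]; exact: le_trans.
exists y; first by rewrite inE ys orbT.
move=> t; rewrite inE => /orP [/eqP ->|/hy//]; exact: ltW.
Qed.

Lemma find_char (T : Type) (a : pred T) (s : seq T) x0 i :
  (i < size s)%N -> a (nth x0 s i) -> (forall j, (j < i)%N -> ~~ a (nth x0 s j)) ->
  find a s = i.
Proof.
move=> isz ai bj.
have hs : has a s by apply/(has_nthP x0); exists i.
case: (ltngtP (find a s) i) => // h.
  by move: (bj _ h); rewrite nth_find.
by move: (before_find x0 h); rewrite ai.
Qed.

End H.

Theorem theorem3 (R : realType) (D : nat)
  (cat : pred 'I_D) (dom : 'I_D -> R -> Prop)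
  (hcat_fin : forall d, cat d -> exists s : seq R, forall v, dom d v -> v \in s)
  (F : 'I_D -> R -> R) (hF : forall d, ~~ cat d -> is_cdf (F d))
  (S : seq (vec R D)) (hS0 : S != [::]) (hSuniq : uniq S)
  (hSX : forall s, s \in S -> inX dom s) :
  IPF_stable_globally cat dom (A_LU cat F S).
Proof.
have mon : forall d, ~~ cat d -> forall u v, u <= v -> F d u <= F d v.
  by move=> d /hF [].
move=> x _; exists (lookup_pt cat F S x); split; first by [].
move=> w hw E; rewrite /A_LU; congr (dirac _ E).
set P := fun x y => all (fun t => cost cat F x y <= cost cat F x t) S.
have hasPx : has (P x) S.
  have [y yS hy] := @exists_min R D (cost cat F x) S hS0.
  by apply/hasP; exists y => //; apply/allP.
set i := find (P x) S.
have isz : (i < size S)%N by rewrite -has_find.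
have hd : head x S = head w S by move: hS0; case: (S).
rewrite /lookup_pt -/(P x) -/(P w) -/i -hd.
set y := nth (head x S) S i.
have Py : P x y by exact: nth_find.
have yS : y \in S by exact: mem_nth.
have ceq := @cost_eq R D cat F dom x y w mon hw.
have key : forall t, t \in S -> cost cat F x y <= cost cat F x t ->
    cost cat F w y <= cost cat F w t.
  move=> t _ h; have := @cost_tri R D cat F x t w; lra.
congr nth; apply: (@find_char _ _ _ (head x S)); first exact: isz.
  change (P w y); apply/allP => t tS; apply: key => //; exact: (allP Py).
move=> j ji; have := before_find (head x S) ji; rewrite -/(P x) /P.
set t := nth _ S j => /negbT /allPn [u uS].
rewrite -ltNge => ut.
have yu : cost cat F x y <= cost cat F x u by exact: (allP Py).
apply/allPn; exists y => //; rewrite -ltNge.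
have := @cost_tri R D cat F x t w; lra.
Qed.
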